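(* Let $G$ denote the group $\operatorname{Hom}(\mathbb Z^{\mathbb N},\mathbb Z)$ of all group homomorphisms from the Baer–Specker group $\mathbb Z^{\mathbb N}$ to $\mathbb Z$ (which is algebraically isomorphic to $\mathbb Z^{(\mathbb N)}$), equipped with the topology $t_p(\mathbb Z^{\mathbb N})$ of pointwise convergence on $\mathbb Z^{\mathbb N}$ (i.e. the topology inherited from $\mathbb Z^{\mathbb Z^{\mathbb N}}$, $\mathbb Z$ discrete). Then the dual group $\widehat G$ is (topologically) isomorphic to the locally quasi-convex tensor product $\mathbb Z^{\mathbb N}\otimes_{\mathcal Q}\mathbb T$.
   Context: All groups are abelian topological groups; $\mathbb T=\mathbb R/\mathbb Z$ (identified with $(-1/2,1/2]$ with addition mod $1$). A character of a topological group is a continuous homomorphism into $\mathbb T$; the dual group $\widehat G$ is the group of characters with the compact-open topology. $\mathbb Z^{\mathbb N}$ carries the product topology ($\mathbb Z$ discrete). A subset $A$ of a topological group $L$ is quasi-convex if for every $g\in L\setminus A$ there is a character $\chi$ of $L$ with $|\chi(a)|\le 1/4$ for all $a\in A$ and $|\chi(g)|>1/4$; $L$ is locally quasi-convex if $0$ has a neighbourhood basis of quasi-convex sets. $\mathcal Q$ is the class of Hausdorff locally quasi-convex abelian groups. A continuous bihomomorphism $b:G_1\times G_2\to L$ is a map such that $b(\cdot,h)$ and $b(g,\cdot)$ are continuous homomorphisms for all fixed $g,h$, and $b$ is continuous at $(0,0)$. For $G_1,G_2\in\mathcal Q$, the $\mathcal Q$-tensor product $G_1\otimes_{\mathcal Q}G_2$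 is a group in $\mathcal Q$ together with a continuous bihomomorphism $\otimes_{\mathcal Q}:G_1\times G_2\to G_1\otimes_{\mathcal Q}G_2$ such that for every continuous bihomomorphism $b:G_1\times G_2\to B$ with $B\in\mathcal Q$ there is a unique continuous homomorphism $\tilde b:G_1\otimes_{\mathcal Q}G_2\to B$ with $\tilde b\circ\otimes_{\mathcal Q}=b$; it exists and is unique up to topological isomorphism. *)

(* Defs.v *)
From HB Require Import structures.
From mathcomp Require Import all_boot all_order all_algebra.
From mathcomp Require Import boolp classical_sets functions.
From mathcomp Require Import reals.
From mathcomp Require Import lra.
Set Implicit Arguments. Unset Strict Implicit. Unset Printing Implicit Defensive.
Import Order.TTheory GRing.Theory Num.Theory.
Local Open Scope classical_set_scope.
Local Open Scope ring_scope.

(* The circle group T = R/Z, realised on the representatives (-1/2,1/2] *)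
Section Torus.
Variable R : realType.

Definition tred (z : R) : R := z + (Num.floor (2^-1 - z))%:~R.

Lemma tred_range z : (- 2^-1 < tred z) && (tred z <= 2^-1).
Proof.
rewrite /tred; have /andP[h1 h2] := Num.Theory.floor_itv (2^-1 - z).
rewrite intrD in h2; apply/andP; split; lra.
Qed.

Lemma tred_shift z (m : int) : tred (z + m%:~R) = tred z.
Proof.
rewrite /tred.
have -> : 2^-1 - (z + m%:~R) = (2^-1 - z) + (- m)%:~R by rewrite intrN; lra.
rewrite Num.Theory.floorDrz ?Num.Theory.intr_int // Num.Theory.intrKfloor intrD intrN.
lra.
Qed.

Lemma tred_id z : (- 2^-1 < z) && (z <= 2^-1) -> tred z = z.
Proof.
move=> /andP[h1 h2]; rewrite /tred.
have -> : Num.floor (2^-1 - z) = 0.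
  by apply: Num.Theory.floor_def; rewrite add0r; apply/andP; split; lra.
by rewrite addr0.
Qed.

Record torus := Torus { tval :> R; tvalP : (- 2^-1 < tval) && (tval <= 2^-1) }.
HB.instance Definition _ := [isSub for tval].
HB.instance Definition _ := [Choice of torus by <:].

Lemma tzero_range : (- 2^-1 < (0:R)) && ((0:R) <= 2^-1).
Proof. by apply/andP; split; lra. Qed.
Definition tzero : torus := Torus tzero_range.
Definition tadd (a b : torus) : torus := Torus (tred_range (tval a + tval b)).
Definition topp (a : torus) : torus := Torus (tred_range (- tval a)).

Lemma tredE z : exists k : int, tred z = z + k%:~R.
Proof. by exists (Num.floor (2^-1 - z)). Qed.

Lemma taddA : associative tadd.
Proof.
move=> a b c; apply: val_inj => /=.
have [k ->] := tredE (tval b + tval c); have [l ->] := tredE (tval a + tval b).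
have -> : tval a + (tval b + tval c + k%:~R) = (tval a + tval b + tval c) + k%:~R.
  by rewrite !addrA.
have -> : tval a + tval b + l%:~R + tval c = (tval a + tval b + tval c) + l%:~R.
  by rewrite addrAC.
by rewrite !tred_shift.
Qed.

Lemma taddC : commutative tadd.
Proof. by move=> a b; apply: val_inj => /=; rewrite addrC. Qed.

Lemma tadd0 : left_id tzero tadd.
Proof. by move=> a; apply: val_inj => /=; rewrite add0r tred_id // tvalP. Qed.

Lemma taddN : left_inverse tzero topp tadd.
Proof.
move=> a; apply: val_inj => /=.
have [k ->] := tredE (- tval a).
rewrite addrAC addNr add0r -[_%:~R]add0r tred_shift tred_id //.
by apply/andP; split; lra.
Qed.

HB.instance Definition _ := GRing.isZmodule.Build torus taddA taddC tadd0 taddN.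

End Torus.

(* Abelian topological groups.  A group is presented as a subgroup     *)
(* [tg_S] of a MathComp zmodType [tg_V] (its carrier), together with a *)
(* family [tg_open] of open subsets of [tg_S] (its topology).  Elements *)
(* of [tg_V] outside [tg_S] play no role.                               *)
Unset Implicit Arguments.

Record tgrp := TGrp {
  tg_V : zmodType;
  tg_S : set tg_V;
  tg_open : set (set tg_V) }.

Arguments tg_S : clear implicits.
Arguments tg_open : clear implicits.

Section TopGroups.
Implicit Types G H L : tgrp.

Definition is_subgroup G :=
  tg_S G 0 /\ forall x y, tg_S G x -> tg_S G y -> tg_S G (x - y).

Definition is_topology G :=
  [/\ (forall U, tg_open G U -> U `<=` tg_S G),
      tg_open G (tg_S G),
      (forall U V, tg_open G U -> tg_open G V -> tg_open G (U `&` V)) &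
      (forall F : set (set (tg_V G)), F `<=` tg_open G ->
         tg_open G (\bigcup_(U in F) U))].

Definition sub_continuous G :=
  forall (x y : tg_V G) W, tg_S G x -> tg_S G y -> tg_open G W -> W (x - y) ->
  exists U V, [/\ tg_open G U, tg_open G V, U x, V y &
                  forall u v, U u -> V v -> W (u - v)].

Definition is_topgroup G := [/\ is_subgroup G, is_topology G & sub_continuous G].

Definition hausdorff G :=
  forall x y : tg_V G, tg_S G x -> tg_S G y -> x <> y ->
  exists U V, [/\ tg_open G U, tg_open G V, U x, V y & U `&` V = set0].

Definition is_hom G H (f : tg_V G -> tg_V H) :=
  (forall x, tg_S G x -> tg_S H (f x)) /\
  (forall x y, tg_S G x -> tg_S G y -> f (x + y) = f x + f y).

Definition is_cont G H (f : tg_V G -> tg_V H) :=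
  forall W, tg_open H W -> tg_open G (tg_S G `&` f @^-1` W).

Definition cont_hom G H (f : tg_V G -> tg_V H) := is_hom G H f /\ is_cont G H f.

Definition top_iso G H :=
  exists (f : tg_V G -> tg_V H) (g : tg_V H -> tg_V G),
  [/\ cont_hom G H f, cont_hom H G g,
      (forall x, tg_S G x -> g (f x) = x) &
      (forall y, tg_S H y -> f (g y) = y)].

Definition cont_bihom G1 G2 L (b : tg_V G1 -> tg_V G2 -> tg_V L) :=
  [/\ (forall g, tg_S G1 g -> cont_hom G2 L (b g)),
      (forall h, tg_S G2 h -> cont_hom G1 L (fun g => b g h)) &
      (forall W, tg_open L W -> W (b 0 0) ->
        exists U V, [/\ tg_open G1 U, tg_open G2 V, U 0, V 0 &
                        forall u v, U u -> V v -> W (b u v)])].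

Definition is_compact G (K : set (tg_V G)) :=
  K `<=` tg_S G /\
  forall F : set (set (tg_V G)), F `<=` tg_open G -> K `<=` \bigcup_(U in F) U ->
  exists (n : nat) (f : nat -> set (tg_V G)),
    (forall i, (i < n)%N -> F (f i)) /\ K `<=` \bigcup_(i in [set i | (i < n)%N]) f i.

End TopGroups.

Section Duality.
Variable R : realType.

Definition tabs (x : torus R) : R := `| tval x |.

Definition torus_open (U : set (torus R)) :=
  forall x, U x -> exists e : R, 0 < e /\ forall y, tabs (y - x) < e -> U y.

Definition TT : tgrp := TGrp (torus R) setT torus_open.

Definition character G (chi : tg_V G -> torus R) := cont_hom G TT chi.

Definition quasi_convex G (A : set (tg_V G)) :=
  A `<=` tg_S G /\
  forall g, tg_S G g -> ~ A g ->
  exists chi, [/\ character G chi,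
                  (forall a, A a -> tabs (chi a) <= 4^-1) &
                  4^-1 < tabs (chi g)].

Definition loc_quasi_convex G :=
  forall U, tg_open G U -> U 0 ->
  exists A, [/\ quasi_convex G A, A `<=` U &
                exists V, [/\ tg_open G V, V 0 & V `<=` A]].

Definition in_Q G := [/\ is_topgroup G, hausdorff G & loc_quasi_convex G].

Definition is_Q_tensor G1 G2 H (t : tg_V G1 -> tg_V G2 -> tg_V H) :=
  [/\ in_Q H, cont_bihom G1 G2 H t &
      forall (B : tgrp) (b : tg_V G1 -> tg_V G2 -> tg_V B),
        in_Q B -> cont_bihom G1 G2 B b ->
        exists bt : tg_V H -> tg_V B,
          [/\ cont_hom H B bt,
              (forall g h, tg_S G1 g -> tg_S G2 h -> bt (t g h) = b g h) &
              forall bt' : tg_V H -> tg_V B, cont_hom H B bt' ->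
                (forall g h, tg_S G1 g -> tg_S G2 h -> bt' (t g h) = b g h) ->
                forall x, tg_S H x -> bt' x = bt x]].

(* the dual group with the compact-open topology; characters are
   normalised to vanish outside the group so that they are determined
   by their values on it *)
Definition dual_S G : set (tg_V G -> torus R) :=
  fun chi => character G chi /\ forall x, ~ tg_S G x -> chi x = 0.

Definition compact_open G (W : set (tg_V G -> torus R)) :=
  W `<=` dual_S G /\
  forall chi, W chi ->
  exists (n : nat) (K : nat -> set (tg_V G)) (U : nat -> set (torus R)),
    (forall i, (i < n)%N -> [/\ is_compact G (K i), torus_open (U i) & chi @` K i `<=` U i]) /\
    (forall psi, dual_S G psi -> (forall i, (i < n)%N -> psi @` K i `<=` U i) -> W psi).

Definition dual G : tgrp := TGrp (tg_V G -> torus R) (dual_S G) (compact_open G).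

End Duality.

Definition ZN_open (W : set (nat -> int)) :=
  forall f, W f -> exists n : nat, forall g, (forall i, (i < n)%N -> g i = f i) -> W g.

Definition ZN : tgrp := TGrp (nat -> int) setT ZN_open.

Definition hom_ZN_Z : set ((nat -> int) -> int) :=
  fun phi => forall x y, phi (x + y) = phi x + phi y.

Definition pointwise_open (W : set ((nat -> int) -> int)) :=
  W `<=` hom_ZN_Z /\
  forall phi, W phi -> exists (n : nat) (xs : nat -> (nat -> int)),
    forall psi, hom_ZN_Z psi -> (forall i, (i < n)%N -> psi (xs i) = phi (xs i)) -> W psi.

Definition HomZN : tgrp := TGrp ((nat -> int) -> int) hom_ZN_Z pointwise_open.

(* Main.v *)
Require Import Defs.
From HB Require Import structures.
From mathcomp Require Import all_boot all_order all_algebra.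
From mathcomp Require Import boolp classical_sets functions reals.
From mathcomp Require Import ring lra zify.
From Stdlib Require List.
Import Order.TTheory GRing.Theory Num.Theory.
Set Implicit Arguments. Unset Strict Implicit. Unset Printing Implicit Defensive.
Local Open Scope ring_scope.
Local Open Scope classical_set_scope.

Section Tor.
Variable R : realType.
Notation tv := (@Defs.tval R).
Notation T := (torus R).

Lemma taddE (a b : T) : tv (a + b) = tred (tv a + tv b). Proof. by []. Qed.
Lemma toppE (a : T) : tv (- a) = tred (- tv a). Proof. by []. Qed.
Lemma t0E : tv (0 : T) = 0. Proof. by []. Qed.

Lemma tvK (a : T) : tred (tv a) = tv a.
Proof. exact: tred_id (tvalP a). Qed.

Lemma tv_range (a : T) : - 2^-1 < tv a /\ tv a <= 2^-1.
Proof. by have /andP[] := tvalP a. Qed.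

Lemma tred_range' (z : R) : - 2^-1 < tred z /\ tred z <= 2^-1.
Proof. by have /andP[] := tred_range z. Qed.

Lemma tred_shift' (z : R) (m : int) : tred (z + m%:~R) = tred z.
Proof. exact: tred_shift. Qed.

Lemma tred_tred (z : R) : tred (tred z) = tred z.
Proof. by have [k Hk] := tredE z; rewrite {1}Hk tred_shift. Qed.

Lemma tredD (z w : R) : tred (tred z + w) = tred (z + w).
Proof. by have [k ->] := tredE z; rewrite addrAC tred_shift. Qed.

Lemma tredDr (z w : R) : tred (z + tred w) = tred (z + w).
Proof. by rewrite addrC tredD addrC. Qed.

Lemma tredN (z : R) : tred (- tred z) = tred (- z).
Proof. by have [k ->] := tredE z; rewrite opprD -intrN tred_shift. Qed.

Lemma tred0 : tred (0 : R) = 0.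
Proof.
rewrite /tred subr0 add0r (_ : Num.floor (2^-1 : R) = 0) //.
by apply: floor_def; rewrite add0r; apply/andP; split; lra.
Qed.

Lemma tmulnE (a : T) n : tv (a *+ n) = tred (n%:R * tv a).
Proof.
elim: n => [|n IH]; first by rewrite mulr0n mul0r tred0.
by rewrite mulrS taddE IH tredDr -addn1 natrD mulrDl mul1r addrC.
Qed.


Lemma tmulzE (a : T) (k : int) : tv (a *~ k) = tred (k%:~R * tv a).
Proof.
case: k => n; first by rewrite /= tmulnE.
rewrite NegzE mulrNz toppE intrN mulNr.
have -> : a *~ n.+1%:Z = a *+ n.+1 by [].
by rewrite tmulnE tredN.
Qed.

Lemma tred_int (m : int) : tred (m%:~R : R) = 0.
Proof. by rewrite -[(m%:~R : R)]add0r tred_shift tred0. Qed.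

Lemma tred_abs (z : R) : `|tred z| <= `|z|.
Proof.
have [k Hk] := tredE z; have [h1 h2] := tred_range' z.
rewrite Hk in h1 h2 *.
have [->|k0] := eqVneq k 0; first by rewrite addr0.
have : (1 <= `|k%:~R : R|) by rewrite -intr_norm ler1z; case: k k0 {Hk h1 h2} => [[|n]|n].
move: (k%:~R : R) h1 h2 => K h1 h2 Hk1.
have HH : `|z + K| <= 2^-1 by rewrite ler_norml; apply/andP; split; lra.
have H3 : `|K| <= `|z| + `|z + K|.
  by rewrite -normrN (_ : - K = z - (z + K)); [apply: ler_normB | ring].
apply: (le_trans HH); lra.
Qed.


Lemma tabsE (a : T) : tabs R a = `|tv a|. Proof. by []. Qed.

Lemma tabs_ge0 (a : T) : 0 <= tabs R a. Proof. exact: normr_ge0. Qed.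
Lemma tabs_le (a : T) : tabs R a <= 2^-1.
Proof. rewrite tabsE ler_norml; have [] := tv_range a; move=> *; apply/andP; split; lra. Qed.

Lemma tabs0 : tabs R (0 : T) = 0. Proof. by rewrite tabsE t0E normr0. Qed.

Lemma tabs_eq0 (a : T) : tabs R a = 0 -> a = 0.
Proof. by rewrite tabsE => /normr0_eq0 h; apply: val_inj. Qed.

Lemma tabsD (a b : T) : tabs R (a + b) <= tabs R a + tabs R b.
Proof. rewrite !tabsE taddE; apply: le_trans (tred_abs _) _; exact: ler_normD. Qed.

Lemma tabsN (a : T) : tabs R (- a) = tabs R a.
Proof.
apply/eqP; rewrite eq_le; apply/andP; split.
  by rewrite !tabsE toppE; apply: le_trans (tred_abs _) _; rewrite normrN.
by rewrite -{1}(opprK a) !tabsE toppE; apply: le_trans (tred_abs _) _; rewrite normrN.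
Qed.

Lemma tabsB (a b : T) : tabs R (a - b) = tabs R (b - a).
Proof. by rewrite -tabsN opprB. Qed.

Lemma tabs_mulz (a : T) (k : int) : tabs R (a *~ k) <= `|k%:~R : R| * tabs R a.
Proof. by rewrite !tabsE tmulzE; apply: le_trans (tred_abs _) _; rewrite normrM. Qed.

Lemma tabs_muln (a : T) (n : nat) : tabs R (a *+ n) <= n%:R * tabs R a.
Proof. by rewrite !tabsE tmulnE; apply: le_trans (tred_abs _) _; rewrite normrM normr_nat. Qed.

Lemma tabs_triang (a b c : T) : tabs R (a - c) <= tabs R (a - b) + tabs R (b - c).
Proof. by rewrite (_ : a - c = (a - b) + (b - c)) ?tabsD // addrA subrK. Qed.

Definition mkT (r : R) : T := Torus (tred_range r).
Lemma mkTE (r : R) : tv (mkT r) = tred r. Proof. by []. Qed.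
Lemma mkTE' (r : R) : - 2^-1 < r -> r <= 2^-1 -> tv (mkT r) = r.
Proof. by move=> h1 h2; rewrite mkTE tred_id //; apply/andP. Qed.

End Tor.

Section Tor2.
Variable R : realType.
Notation tv := (@Defs.tval R).
Notation T := (torus R).

Lemma archi_gt (x : R) : exists n : nat, x < n%:R.
Proof.
exists (Num.Def.archi_bound `|x|); apply: le_lt_trans (ler_norm x) _.
exact: archi_boundP.
Qed.

Lemma tred_small (y : R) : `|y| + `|tred y| < 1 -> tred y = y.
Proof.
have [k Hk] := tredE y; rewrite Hk => h.
have [->|k0] := eqVneq k 0; first by rewrite addr0.
have : (1 <= `|k%:~R : R|) by rewrite -intr_norm ler1z; case: k k0 {Hk h} => [[|n]|n].
move: (k%:~R : R) h => K h HK.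
have : `|K| <= `|y| + `|y + K|.
  by rewrite -normrN (_ : - K = y - (y + K)); [apply: ler_normB | ring].
lra.
Qed.

Lemma tred_mulzr (k : int) (z : R) : tred (k%:~R * tred z) = tred (k%:~R * z).
Proof. by have [m ->] := tredE z; rewrite mulrDr -intrM tred_shift. Qed.

Lemma tred_mulnr (n : nat) (z : R) : tred (n%:R * tred z) = tred (n%:R * z).
Proof. by have := tred_mulzr n z; rewrite -!pmulrn. Qed.

Lemma tmult (w : T) (m : nat) : (0 < m)%N ->
  (forall l, (0 < l)%N -> (l <= m)%N -> tabs R (w *+ l) <= 4^-1) ->
  m%:R * tabs R w <= 4^-1.
Proof.
move=> m0 H.
have H1 : `|tv w| <= 4^-1 by have := H 1%N isT m0; rewrite mulr1n.
have key : forall l, (l <= m)%N -> tv (w *+ l) = l%:R * tv w.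
  elim=> [|l IH] hl; first by rewrite mulr0n mul0r t0E.
  have hl' : (l <= m)%N by apply: leq_trans hl.
  have IH' := IH hl'.
  have Hl : `|l%:R * tv w| <= 4^-1.
    case: l {IH hl} hl' IH' => [|l] hl' IH'; first by rewrite mul0r normr0; lra.
    by rewrite -IH'; apply: H.
  have Hl1 := H l.+1 isT hl; rewrite tabsE tmulnE in Hl1.
  rewrite tmulnE tred_small //.
  rewrite -addn1 natrD mulrDl mul1r.
  have := ler_normD (l%:R * tv w) (tv w); rewrite -addn1 natrD mulrDl mul1r in Hl1.
  lra.
by rewrite tabsE -normr_nat -normrM -key // -tabsE; apply: H.
Qed.

Lemma tsmall0 (w : T) : (forall n : nat, tabs R (w *+ n) <= 4^-1) -> w = 0.
Proof.
move=> H; apply: tabs_eq0.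
have h0 := tabs_ge0 w.
have [->|] := eqVneq (tabs R w) 0; first by [].
rewrite neq_lt ltNge h0 /= => hp.
have [n hn] := archi_gt ((tabs R w)^-1).
have := tmult (m := n.+1) isT (fun l _ _ => H l).
have ht : tabs R w * (tabs R w)^-1 = 1 by rewrite mulfV ?lt0r_neq0.
have : n%:R * tabs R w > 1 by nra.
rewrite -addn1 natrD mulrDl mul1r; lra.
Qed.

Lemma tdiv (y : T) (d : nat) : (0 < d)%N -> exists w : T, w *+ d = y.
Proof.
move=> d0; exists (mkT (tv y / d%:R)); apply: val_inj => /=.
rewrite tmulnE mkTE tred_mulnr mulrC -mulrA mulVf ?mulr1 ?tvK //.
by rewrite pnatr_eq0 -lt0n.
Qed.

Lemma thalf (a : int) : a != 0 ->
  tabs R (mkT (2^-1 / `|a%:~R|)) = 2^-1 / `|a%:~R| /\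
  tabs R (mkT (2^-1 / `|a%:~R|) *~ a) = 2^-1.
Proof.
move=> a0.
have ha : 1 <= `|a%:~R : R| by rewrite -intr_norm ler1z; case: a a0 => [[|n]|n].
have hr : 0 < 2^-1 / `|a%:~R : R| <= 2^-1.
  apply/andP; split; first by apply: divr_gt0; lra.
  by rewrite ler_pdivrMr; [nra | lra].
move/andP: hr => [hr1 hr2].
have E : tv (mkT (2^-1 / `|a%:~R|)) = 2^-1 / `|a%:~R| by apply: mkTE'; lra.
split; first by rewrite tabsE E ger0_norm //; lra.
rewrite tabsE tmulzE E.
have [ap|an] := ltP 0 a.
  have az : (a%:~R : R) != 0 by rewrite intr_eq0.
  have -> : a%:~R * (2^-1 / `|a%:~R|) = 2^-1 :> R.
    by rewrite gtr0_norm ?ltr0z //; field.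
  rewrite tred_id; first by rewrite ger0_norm //; lra.
  by apply/andP; split; lra.
have an' : a < 0 by rewrite lt_neqAle a0 an.
have az : (a%:~R : R) != 0 by rewrite intr_eq0.
have -> : a%:~R * (2^-1 / `|a%:~R|) = - 2^-1 :> R.
  by rewrite ltr0_norm ?ltrz0 //; field.
have -> : - 2^-1 = 2^-1 + (-1)%:~R :> R by rewrite intrN; lra.
rewrite tred_shift tred_id; first by rewrite ger0_norm //; lra.
by apply/andP; split; lra.
Qed.

Lemma tinj (a b : int) : (forall z : T, z *~ a = z *~ b) -> a = b.
Proof.
move=> H; apply/eqP; rewrite -subr_eq0; apply/negPn/negP => c0.
have [_ h] := thalf c0.
have : tabs R (mkT (2^-1 / `|(a - b)%:~R|) *~ (a - b)) = 0.
  by rewrite mulrzBr H subrr tabs0.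
rewrite h; lra.
Qed.

Lemma tbound (a : int) (d : R) : 0 < d ->
  (forall z : T, tabs R z < d -> tabs R (z *~ a) <= 4^-1) -> `|a%:~R : R| * d <= 2^-1.
Proof.
move=> d0 H; have [->|a0] := eqVneq a 0; first by rewrite normr0 mul0r; lra.
rewrite leNgt; apply/negP => hlt.
have [h1 h2] := thalf a0.
have ha : 0 < `|a%:~R : R| by rewrite normr_gt0 intr_eq0.
have : tabs R (mkT (2^-1 / `|a%:~R|)) < d.
  by rewrite h1 ltr_pdivrMr // mulrC.
move/H; rewrite h2; lra.
Qed.

Lemma tzero_mult (a : int) (d : R) : 0 < d ->
  (forall m : nat, `|(a * m%:Z)%:~R : R| * d <= 2^-1) -> a = 0.
Proof.
move=> d0 H; apply/eqP/negPn/negP => a0.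
have ha : 1 <= `|a%:~R : R| by rewrite -intr_norm ler1z; case: a a0 {H} => [[|n]|n].
have [n hn] := archi_gt (d^-1).
have := H n; rewrite intrM normrM -mulrA.
have ht : d * d^-1 = 1 by rewrite mulfV ?lt0r_neq0.
have : n%:R * d > 1 by nra.
rewrite (_ : (n%:Z)%:~R = n%:R :> R) // normr_nat.
nra.
Qed.

End Tor2.

Section Generic.
Variables (G H L : tgrp).

Lemma sg0 : is_subgroup G -> tg_S G 0. Proof. by case. Qed.
Lemma sgB x y : is_subgroup G -> tg_S G x -> tg_S G y -> tg_S G (x - y).
Proof. by case=> _ h; apply: h. Qed.
Lemma sgN x : is_subgroup G -> tg_S G x -> tg_S G (- x).
Proof. by move=> hG hx; rewrite -sub0r; apply: sgB => //; apply: sg0. Qed.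
Lemma sgD x y : is_subgroup G -> tg_S G x -> tg_S G y -> tg_S G (x + y).
Proof. by move=> hG hx hy; rewrite -(opprK y); apply: sgB => //; apply: sgN. Qed.
Lemma sgMn x n : is_subgroup G -> tg_S G x -> tg_S G (x *+ n).
Proof.
move=> hG hx; elim: n => [|n IH]; first by rewrite mulr0n; apply: sg0.
by rewrite mulrS; apply: sgD.
Qed.
Lemma sgMz x (k : int) : is_subgroup G -> tg_S G x -> tg_S G (x *~ k).
Proof.
move=> hG hx; case: k => n; first exact: sgMn.
by rewrite NegzE mulrNz; apply: sgN => //; apply: sgMn.
Qed.
Lemma sgSum n (F : nat -> tg_V G) : is_subgroup G -> (forall i, (i < n)%N -> tg_S G (F i)) ->
  tg_S G (\sum_(i < n) F i).
Proof.
move=> hG; elim: n => [|n IH] hF; first by rewrite big_ord0; apply: sg0.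
rewrite big_ord_recr /=; apply: sgD => //; last exact: hF.
by apply: IH => i hi; apply: hF; apply: ltnW.
Qed.

Variable f : tg_V G -> tg_V H.
Hypothesis hG : is_subgroup G.
Hypothesis hf : is_hom G H f.

Lemma homS x : tg_S G x -> tg_S H (f x). Proof. by case: hf => h _; apply: h. Qed.
Lemma homD x y : tg_S G x -> tg_S G y -> f (x + y) = f x + f y.
Proof. by case: hf => _ h; apply: h. Qed.
Lemma hom0 : f 0 = 0.
Proof.
have h0 := sg0 hG.
have h := homD h0 h0; apply: (addrI (f 0)); by rewrite [RHS]addr0 -h addr0.
Qed.
Lemma homN x : tg_S G x -> f (- x) = - f x.
Proof.
move=> hx; have h := homD hx (sgN hG hx); rewrite subrr hom0 in h.
by apply/eqP; rewrite -addr_eq0 addrC -h.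
Qed.
Lemma homB x y : tg_S G x -> tg_S G y -> f (x - y) = f x - f y.
Proof. by move=> hx hy; rewrite homD ?homN //; apply: sgN. Qed.
Lemma homMn x n : tg_S G x -> f (x *+ n) = f x *+ n.
Proof.
move=> hx; elim: n => [|n IH]; first by rewrite !mulr0n hom0.
by rewrite !mulrS homD ?IH //; apply: sgMn.
Qed.
Lemma homMz x (k : int) : tg_S G x -> f (x *~ k) = f x *~ k.
Proof.
move=> hx; case: k => n; first exact: homMn.
by rewrite NegzE !mulrNz homN ?homMn //; apply: sgMn.
Qed.
Lemma homSum n (F : nat -> tg_V G) : (forall i, (i < n)%N -> tg_S G (F i)) ->
  f (\sum_(i < n) F i) = \sum_(i < n) f (F i).
Proof.
elim: n => [|n IH] hF; first by rewrite !big_ord0 hom0.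
have hF' : forall i, (i < n)%N -> tg_S G (F i) by move=> i hi; apply: hF; apply: ltnW.
by rewrite !big_ord_recr /= homD ?IH //; [apply: sgSum | apply: hF].
Qed.

End Generic.

Lemma cont_hom_comp (G H L : tgrp) (f : tg_V G -> tg_V H) (g : tg_V H -> tg_V L) :
  cont_hom G H f -> cont_hom H L g -> cont_hom G L (g \o f).
Proof.
move=> [[fS fD] fc] [[gS gD] gc]; split; first split.
- by move=> x hx; apply: gS; apply: fS.
- by move=> x y hx hy /=; rewrite fD // gD //; apply: fS.
move=> W hW.
have -> : tg_S G `&` (g \o f) @^-1` W = tg_S G `&` f @^-1` (tg_S H `&` g @^-1` W).
  apply/seteqP; split => x /=; first by move=> [hx hw]; split => //; split => //; apply: fS.
  by move=> [hx [_ hw]].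
by apply: fc; apply: gc.
Qed.

Lemma cont_hom_id (H : tgrp) : is_topology H -> cont_hom H H id.
Proof.
move=> [hsub _ _ _]; split; first by split.
move=> W hW; have -> : tg_S H `&` id @^-1` W = W; last by [].
by apply/seteqP; split => x /=; [case | move=> hx; split => //; apply: hsub hW _ hx].
Qed.

Section CharT.
Variable R : realType.
Notation tv := (@Defs.tval R).
Notation T := (torus R).

Definition tball (c : T) (r : R) : set T := [set z | tabs R (z - c) < r].

Lemma tball_open c r : torus_open R (tball c r).
Proof.
move=> x hx; exists (r - tabs R (x - c)); split; first by rewrite subr_gt0.
move=> y hy; rewrite /tball /=.
have := tabs_triang y x c; lra.
Qed.

Lemma TT_subgroup : is_subgroup (TT R). Proof. by []. Qed.

Lemma charT (psi : T -> T) : cont_hom (TT R) (TT R) psi ->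
  exists k : int, forall z, psi z = z *~ k.
Proof.
move=> [hh hc].
have hSG : is_subgroup (TT R) by [].
have p0 : psi 0 = 0 := hom0 hSG hh.
have hpD : forall x y, psi (x + y) = psi x + psi y by move=> x y; apply: (homD hh).
have hpMz : forall x (k : int), psi (x *~ k) = psi x *~ k by move=> x k; apply: (homMz hSG hh).
have hpMn : forall x n, psi (x *+ n) = psi x *+ n by move=> x n; apply: (homMn hSG hh).
have hpB : forall x y, psi (x - y) = psi x - psi y by move=> x y; apply: (homB hSG hh).
have [e [e0 he]] : exists e : R, 0 < e /\ forall y, tabs R (y - 0) < e ->
    tabs R (psi y - 0) < 8^-1.
  have := hc _ (@tball_open (0 : T) (8^-1)) 0; case.
    by split => //; rewrite /tball /= p0 subr0 tabs0; lra.
  move=> e [e0 H]; exists e; split => // y hy.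
  by case: (H y hy).
have he' : forall y, tabs R y < e -> tabs R (psi y) < 8^-1.
  by move=> y hy; have := he y; rewrite !subr0; apply.
have [n hn] := archi_gt e^-1.
pose N := n.+2.
have hN0 : (0 : R) < N%:R by rewrite ltr0n.
have hNe : N%:R^-1 < e.
  have hnN : (n%:R : R) <= N%:R by rewrite ler_nat /N (leq_trans (leqnSn n)).
  rewrite invf_plt ?posrE //; lra.
have hN2 : (N%:R^-1 : R) <= 2^-1.
  have h2 : (2 : R) <= N%:R by rewrite /N ler_nat.
  rewrite lef_pV2 ?posrE //; lra.
have hNi0 : (0 : R) < N%:R^-1 by rewrite invr_gt0.
pose u : T := mkT (N%:R^-1).
have tu : tv u = N%:R^-1 by apply: mkTE'; lra.
pose a : T := psi u.
have ha : tabs R a < 8^-1 by apply: he'; rewrite tabsE tu ger0_norm //; lra.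
have uN : u *+ N = 0.
  apply: val_inj; change (tv (u *+ N) = tv 0); rewrite tmulnE tu mulfV ?lt0r_neq0 //.
  exact: (tred_int R 1).
have aN : tred (N%:R * tv a) = 0.
  by rewrite -tmulnE -hpMn uN p0.
have [F hF] : exists F : int, N%:R * tv a + F%:~R = 0.
  by exists (Num.floor (2^-1 - N%:R * tv a)); exact: aN.
pose k := - F.
have hk : k%:~R = N%:R * tv a.
  by rewrite /k intrN; apply/eqP; rewrite eq_sym -addr_eq0 hF.
exists k => z.
pose phi x := psi x - x *~ k.
have phiMn : forall x n, phi (x *+ n) = phi x *+ n.
  by move=> x m; rewrite /phi hpMn mulrnBl !pmulrn mulrzAC.
have phiD : forall x y, phi (x + y) = phi x + phi y.
  by move=> x y; rewrite /phi hpD mulrzDl opprD addrACA.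
have phiMz : forall x (j : int), phi (x *~ j) = phi x *~ j.
  by move=> x j; rewrite /phi hpMz mulrzBl mulrzAC.
have ukE : u *~ k = a.
  apply: val_inj; change (tv (u *~ k) = tv a).
  rewrite tmulzE tu hk mulrC mulrA mulVf ?lt0r_neq0 // mul1r; exact: tvK.
have phiu : phi u = 0 by rewrite /phi ukE subrr.
have hsmall : forall x, tabs R (phi x) < 4^-1.
  move=> x.
  pose j := Num.floor (N%:R * tv x).
  have /andP[hj1 hj2] := floor_itv (N%:R * tv x).
  rewrite -/j intrD in hj1 hj2.
  pose rho := tv x - j%:~R / N%:R.
  have hNN : N%:R * N%:R^-1 = 1 :> R by rewrite mulfV ?lt0r_neq0.
  have hrho1 : 0 <= rho.
    rewrite /rho subr_ge0 ler_pdivrMr //; lra.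
  have hrho2 : rho < N%:R^-1.
    rewrite /rho ltrBlDl -[X in _ < _ + X]mul1r -mulrDl ltr_pdivlMr //. lra.
  pose r : T := mkT rho.
  have tr : tv r = rho by apply: mkTE'; lra.
  have xE : x = r + u *~ j.
    apply: val_inj; change (tv x = tv (r + u *~ j)).
    rewrite taddE tmulzE tr tu tredDr /rho subrK; exact: esym (tvK x).
  rewrite xE phiD phiMz phiu mul0rz addr0.
  have t1 : tabs R (psi r) < 8^-1 by apply: he'; rewrite tabsE tr ger0_norm //; lra.
  have t2 : tabs R (r *~ k) <= `|k%:~R : R| * rho.
    by have h := tabs_mulz r k; rewrite [tabs R r]tabsE tr (ger0_norm hrho1) in h.
  have t3 : `|k%:~R : R| * rho <= `|tv a|.
    rewrite hk normrM normr_nat.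
    have h0 : 0 <= `|tv a| by [].
    have h1 : N%:R * rho <= 1 by nra.
    have -> : N%:R * `|tv a| * rho = `|tv a| * (N%:R * rho) by ring.
    by rewrite ler_piMr.
  have t4 := tabsD (psi r) (- (r *~ k)); rewrite tabsN in t4.
  rewrite /phi; move: ha; rewrite tabsE => ha; lra.
have phi0 : phi z = 0.
  apply: tsmall0 => m; rewrite -phiMn; apply: ltW; exact: hsmall.
by apply/eqP; rewrite -subr_eq0; apply/eqP.
Qed.
End CharT.

Notation Vz := (nat -> int).
Notation Hm := ((nat -> int) -> int).

Lemma fctD (f g : Hm) x : (f + g) x = f x + g x. Proof. by []. Qed.
Lemma fctN (f : Hm) x : (- f) x = - f x. Proof. by []. Qed.
Lemma fctB (f g : Hm) x : (f - g) x = f x - g x. Proof. by []. Qed.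
Lemma fct0 x : (0 : Hm) x = 0. Proof. by []. Qed.
Lemma fctMn (f : Hm) n x : (f *+ n) x = f x *+ n. Proof. by rewrite natmulfctE. Qed.
Lemma fctMz (f : Hm) (k : int) x : (f *~ k) x = f x * k.
Proof.
rewrite -mulrzz; case: k => n; first by rewrite -!pmulrn fctMn.
by rewrite NegzE !mulrNz fctN -!pmulrn fctMn.
Qed.

Lemma vD (f g : Vz) i : (f + g) i = f i + g i. Proof. by []. Qed.
Lemma vN (f : Vz) i : (- f) i = - f i. Proof. by []. Qed.
Lemma vB (f g : Vz) i : (f - g) i = f i - g i. Proof. by []. Qed.
Lemma v0 i : (0 : Vz) i = 0. Proof. by []. Qed.

Lemma HomZN_subgroup : is_subgroup HomZN.
Proof.
split; first by move=> x y; rewrite !fct0 addr0.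
move=> f g hf hg x y; rewrite !fctB hf hg; ring.
Qed.

Lemma homZ_B f g : hom_ZN_Z f -> hom_ZN_Z g -> hom_ZN_Z (f - g).
Proof. exact: (@sgB HomZN f g HomZN_subgroup). Qed.
Lemma homZ_N f : hom_ZN_Z f -> hom_ZN_Z (- f).
Proof. exact: (@sgN HomZN f HomZN_subgroup). Qed.
Lemma homZ_D f g : hom_ZN_Z f -> hom_ZN_Z g -> hom_ZN_Z (f + g).
Proof. exact: (@sgD HomZN f g HomZN_subgroup). Qed.
Lemma homZ_Mz f k : hom_ZN_Z f -> hom_ZN_Z (f *~ k).
Proof. exact: (@sgMz HomZN f k HomZN_subgroup). Qed.
Lemma homZ_Mn f k : hom_ZN_Z f -> hom_ZN_Z (f *+ k).
Proof. exact: (@sgMn HomZN f k HomZN_subgroup). Qed.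
Lemma homZ_0 : hom_ZN_Z 0.
Proof. exact: (@sg0 HomZN HomZN_subgroup). Qed.

Lemma ZN_subgroup : is_subgroup ZN. Proof. by []. Qed.

Section HomProps.
Variable phi : Hm.
Hypothesis hphi : hom_ZN_Z phi.
Lemma phi0 : phi 0 = 0.
Proof. have := hphi 0 0; rewrite addr0 => /eqP; rewrite addrC -subr_eq subrr eq_sym => /eqP //. Qed.
Lemma phiN x : phi (- x) = - phi x.
Proof. by apply/eqP; rewrite -addr_eq0 addrC -hphi subrr phi0. Qed.
Lemma phiB x y : phi (x - y) = phi x - phi y.
Proof. by rewrite hphi phiN. Qed.
Lemma phiMn x n : phi (x *+ n) = phi x *+ n.
Proof. elim: n => [|n IH]; first by rewrite !mulr0n phi0. by rewrite !mulrS hphi IH. Qed.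
Lemma phiMz x (k : int) : phi (x *~ k) = phi x * k.
Proof.
rewrite -mulrzz; case: k => n; first exact: phiMn.
by rewrite NegzE !mulrNz phiN phiMn.
Qed.
End HomProps.

Lemma hom_S phi : tg_S HomZN phi = hom_ZN_Z phi. Proof. by []. Qed.

Section CharHom.
Variable R : realType.
Notation T := (torus R).

Lemma char_vanish (chi : Hm -> T) : character R HomZN chi ->
  exists n (xs : nat -> Vz), forall psi, hom_ZN_Z psi ->
    (forall i, (i < n)%N -> psi (xs i) = 0) -> chi psi = 0.
Proof.
move=> [hh hc].
have c0 : chi 0 = 0 := hom0 HomZN_subgroup hh.
have [_ H] := hc _ (@tball_open R 0 (4^-1)).
have [] := H 0.
  split; first exact: homZ_0.
  by rewrite /tball /= c0 subr0 tabs0; lra.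
move=> n [xs Hxs]; exists n, xs => psi hpsi hv.
apply: tsmall0 => m; rewrite -(homMn HomZN_subgroup hh) //.
have [_ h] : (tg_S HomZN `&` chi @^-1` tball 0 4^-1) (psi *+ m).
  apply: Hxs; first exact: homZ_Mn.
  by move=> i hi; rewrite fctMn hv // mul0rn fct0.
by move: h; rewrite /tball /= subr0 => /ltW.
Qed.

Lemma char_rep n (xs : nat -> Vz) : forall chi : Hm -> T, is_hom HomZN (TT R) chi ->
  (forall psi, hom_ZN_Z psi -> (forall i, (i < n)%N -> psi (xs i) = 0) -> chi psi = 0) ->
  exists zs : nat -> T, forall phi, hom_ZN_Z phi ->
    chi phi = \sum_(i < n) zs i *~ phi (xs i).
Proof.
elim: n => [|n IH] chi hh hv.
  by exists (fun _ => 0) => phi hphi; rewrite big_ord0; apply: hv.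
have hG := HomZN_subgroup.
have ext : forall (zs : nat -> T) w phi,
    \sum_(i < n.+1) (fun i => if i == n then w else zs i) i *~ phi (xs i) =
    \sum_(i < n) zs i *~ phi (xs i) + w *~ phi (xs n).
  move=> zs w phi; rewrite big_ord_recr /= eqxx; congr (_ + _).
  by apply: eq_bigr => i _; rewrite (ltn_eqF (ltn_ord i)).
case: (pselect (exists phi0, hom_ZN_Z phi0 /\ (forall i, (i < n)%N -> phi0 (xs i) = 0)
   /\ phi0 (xs n) != 0)) => [[phi0 [h0 [k0 nz]]]|nP].
- pose P := fun m : nat => (0 < m)%N && `[< exists phi, hom_ZN_Z phi /\
     (forall i, (i < n)%N -> phi (xs i) = 0) /\ phi (xs n) = m%:Z >].
  have exP : exists m, P m.
    have [pos|neg] := ltP 0 (phi0 (xs n)).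
      exists `|phi0 (xs n)|%N; apply/andP; split; first by rewrite absz_gt0.
      apply/asboolP; exists phi0; split => //; split => //.
      by rewrite gez0_abs // ltW.
    exists `|phi0 (xs n)|%N; apply/andP; split; first by rewrite absz_gt0.
    apply/asboolP; exists (- phi0); split; first exact: homZ_N.
    split; first by move=> i hi; rewrite fctN k0 // oppr0.
    rewrite fctN ltz0_abs // lt_neqAle nz; exact: neg.
  case: (ex_minnP exP) => d /andP[d0 /asboolP [ps [hps [kps vps]]]] dmin.
  have hdiv : forall phi, hom_ZN_Z phi -> (forall i, (i < n)%N -> phi (xs i) = 0) ->
      phi (xs n) = (phi (xs n) %/ d%:Z)%Z * d%:Z.
    move=> phi hphi kphi.
    set q := (phi (xs n) %/ d%:Z)%Z.
    pose r := (phi (xs n) %% d%:Z)%Z.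
    have e := divz_eq (phi (xs n)) d%:Z; rewrite -/q -/r in e.
    have r0 : 0 <= r by apply: modz_ge0; rewrite eqz_nat -lt0n.
    have rd : r < d%:Z by apply: ltz_pmod; rewrite ltz_nat.
    have [r00|rp] := eqVneq r 0; first by rewrite {1}e r00 addr0.
    exfalso.
    have : P `|r|%N.
      apply/andP; split; first by rewrite absz_gt0.
      apply/asboolP; exists (phi - ps *~ q); split; first by apply: homZ_B => //; apply: homZ_Mz.
      split; first by move=> i hi; rewrite fctB fctMz kphi // kps // mul0r subr0.
      rewrite fctB fctMz vps gez0_abs // {1}e; ring.
    move/dmin; rewrite leqNgt => /negP; apply.
    by rewrite -ltz_nat gez0_abs.
  have [w hw] := tdiv (chi ps) d0.
  pose chi' := fun phi => chi phi - w *~ phi (xs n).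
  have hh' : is_hom HomZN (TT R) chi'.
    split; first by [].
    by move=> x y hx hy; rewrite /chi' (homD hh) // fctD mulrzDr opprD addrACA.
  have hv' : forall psi, hom_ZN_Z psi -> (forall i, (i < n)%N -> psi (xs i) = 0) ->
      chi' psi = 0.
    move=> psi hpsi kpsi.
    set q := (psi (xs n) %/ d%:Z)%Z.
    have eq := hdiv psi hpsi kpsi; rewrite -/q in eq.
    have hpsi' : hom_ZN_Z (psi - ps *~ q) by apply: homZ_B => //; apply: homZ_Mz.
    have z1 : chi (psi - ps *~ q) = 0.
      apply: hv => // i hi; rewrite fctB fctMz.
      have [hin|] := ltnP i n; first by rewrite kpsi // kps // mul0r subr0.
      rewrite leq_eqVlt ltnNge -ltnS hi orbF => /eqP <-.
      by rewrite vps {1}eq mulrC subrr.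
    rewrite (homB hG hh) // in z1; last by apply: homZ_Mz.
    rewrite /chi'; move/eqP: z1; rewrite subr_eq0 => /eqP ->.
    by rewrite (homMz hG hh) // -hw eq pmulrn mulrzA_C subrr.
  have [zs hzs] := IH chi' hh' hv'.
  exists (fun i => if i == n then w else zs i) => phi hphi.
  by rewrite ext -hzs // /chi' subrK.
- have hv0 : forall psi, hom_ZN_Z psi -> (forall i, (i < n)%N -> psi (xs i) = 0) ->
      chi psi = 0.
    move=> psi hpsi kpsi; apply: hv => // i hi.
    have [hin|] := ltnP i n; first exact: kpsi.
    rewrite leq_eqVlt ltnNge -ltnS hi orbF => /eqP <-.
    apply/eqP; apply: contrapT => nz; apply: nP; exists psi; split => //; split => //.
    exact/negP.
  have [zs hzs] := IH chi hh hv0.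
  exists (fun i => if i == n then 0 else zs i) => phi hphi.
  by rewrite ext -hzs // mul0rz addr0.
Qed.

End CharHom.

Definition catf {A : Type} (n1 : nat) (f1 f2 : nat -> A) : nat -> A :=
  fun i => if (i < n1)%N then f1 i else f2 (i - n1)%N.

Lemma sum_catf {A B : Type} {M : nmodType} (F : A -> B -> M) n1 n2 a1 a2 b1 b2 :
  \sum_(i < n1 + n2) F (catf n1 a1 a2 i) (catf n1 b1 b2 i) =
  \sum_(i < n1) F (a1 i) (b1 i) + \sum_(i < n2) F (a2 i) (b2 i).
Proof.
rewrite big_split_ord /=; congr (_ + _); apply: eq_bigr => i _; rewrite /catf /=.
  by rewrite ltn_ord.
by rewrite ltnNge leq_addr /= addKn.
Qed.

Section Dual.
Variable R : realType.
Notation T := (torus R).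

Definition dmap (x : Vz) (z : T) : Hm -> T :=
  fun phi => if pselect (hom_ZN_Z phi) then z *~ phi x else 0.

Lemma dmapE x z phi : hom_ZN_Z phi -> dmap x z phi = z *~ phi x.
Proof. by move=> h; rewrite /dmap; case: pselect. Qed.
Lemma dmapN x z phi : ~ hom_ZN_Z phi -> dmap x z phi = 0.
Proof. by move=> h; rewrite /dmap; case: pselect. Qed.

Definition Rep := (nat * (nat -> Vz) * (nat -> T))%type.
Definition rep_ok (chi : Hm -> T) (r : Rep) :=
  forall phi, hom_ZN_Z phi -> chi phi = \sum_(i < r.1.1) r.2 i *~ phi (r.1.2 i).

Definition rcat (r1 r2 : Rep) : Rep :=
  ((r1.1.1 + r2.1.1)%N, catf r1.1.1 r1.1.2 r2.1.2, catf r1.1.1 r1.2 r2.2).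

Lemma rep_okD chi1 chi2 r1 r2 : rep_ok chi1 r1 -> rep_ok chi2 r2 ->
  rep_ok (chi1 + chi2) (rcat r1 r2).
Proof.
move=> h1 h2 phi hphi; rewrite /rcat /=.
rewrite (sum_catf (fun x z => z *~ phi x)) -h1 // -h2 //.
Qed.

Lemma dual_rep (chi : Hm -> T) : dual_S R HomZN chi -> exists r, rep_ok chi r.
Proof.
move=> [hc _]; have [n [xs hv]] := char_vanish hc.
have [zs hzs] := char_rep hc.1 hv.
by exists (n, xs, zs).
Qed.

Lemma dmap_rep x z : rep_ok (dmap x z) (1%N, fun _ => x, fun _ => z).
Proof. by move=> phi hphi; rewrite dmapE // big_ord1. Qed.

Variable H : tgrp.
Variable t : Vz -> T -> tg_V H.
Hypothesis hQ : in_Q R H.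
Hypothesis hb : cont_bihom ZN (TT R) H t.

Lemma hSH : is_subgroup H. Proof. by case: hQ => [[]]. Qed.
Lemma hTopH : is_topology H. Proof. by case: hQ => [[]]. Qed.
Lemma hSubH : sub_continuous H. Proof. by case: hQ => [[]]. Qed.

Lemma t_hom1 x : cont_hom (TT R) H (t x). Proof. by case: hb => h _ _; apply: h. Qed.
Lemma t_hom2 z : cont_hom ZN H (fun x => t x z). Proof. by case: hb => _ h _; apply: h. Qed.
Lemma tS x z : tg_S H (t x z). Proof. by case: (t_hom1 x) => [[h _] _]; apply: h. Qed.
Lemma tD1 x y z : t (x + y) z = t x z + t y z.
Proof. by case: (t_hom2 z) => [[_ h] _]; apply: h. Qed.
Lemma tD2 x z1 z2 : t x (z1 + z2) = t x z1 + t x z2.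
Proof. by case: (t_hom1 x) => [[_ h] _]; apply: h. Qed.

Lemma sepQ y : tg_S H y -> y <> 0 ->
  exists xi, character R H xi /\ xi y <> 0.
Proof.
move=> hy y0; case: hQ => [[hsg htop _] hH hl].
have [U [V [oU oV Uy V0 UV]]] := hH y 0 hy (sg0 hsg) y0.
have [A [[AS Aq] AV _]] := hl V oV V0.
have nA : ~ A y.
  move=> Ay; have : (U `&` V) y by split => //; apply: AV.
  by rewrite UV.
have [xi [cxi _ hxi]] := Aq y hy nA.
exists xi; split => // h0; move: hxi; rewrite h0 tabs0; lra.
Qed.

Lemma kxi xi : character R H xi ->
  exists k, hom_ZN_Z k /\ forall x z, xi (t x z) = z *~ k x.
Proof.
move=> cxi.
have ex : forall x, exists k : int, forall z, xi (t x z) = z *~ k.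
  move=> x; apply: charT.
  exact: (cont_hom_comp (t_hom1 x) cxi).
have [k hk] := choice ex.
exists k; split => // x y.
apply: (@tinj R) => z; by rewrite -hk tD1 (homD cxi.1 (tS x z) (tS y z)) !hk mulrzDr.
Qed.

Definition tsum (r : Rep) : tg_V H := \sum_(i < r.1.1) t (r.1.2 i) (r.2 i).

Lemma tsumS r : tg_S H (tsum r).
Proof. rewrite /tsum; apply: (@sgSum H _ (fun i => t (r.1.2 i) (r.2 i)) hSH) => i _; apply: tS. Qed.

Lemma xi_tsum xi k r : character R H xi -> (forall x z, xi (t x z) = z *~ k x) ->
  xi (tsum r) = \sum_(i < r.1.1) r.2 i *~ k (r.1.2 i).
Proof.
move=> cxi hk; rewrite /tsum (@homSum _ _ _ hSH cxi.1 r.1.1 (fun i => t (r.1.2 i) (r.2 i))); last by move=> *; apply: tS.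
by apply: eq_bigr => i _; rewrite hk.
Qed.

Lemma WD chi r1 r2 : rep_ok chi r1 -> rep_ok chi r2 -> tsum r1 = tsum r2.
Proof.
move=> h1 h2; apply/eqP; rewrite -subr_eq0; apply/eqP; apply: contrapT => ne.
have hy : tg_S H (tsum r1 - tsum r2) by apply: sgB hSH (tsumS _) (tsumS _).
have [xi [cxi hxi]] := sepQ hy ne.
have [k [hk hkx]] := kxi cxi.
apply: hxi; rewrite (homB hSH cxi.1 (tsumS _) (tsumS _)) (xi_tsum r1 cxi hkx) (xi_tsum r2 cxi hkx).
by rewrite -h1 // -h2 // subrr.
Qed.

Definition fmap (chi : Hm -> T) : tg_V H :=
  match pselect (exists r, rep_ok chi r) with
  | left h => tsum (proj1_sig (cid h))
  | right _ => 0
  end.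

Lemma fmapE chi r : rep_ok chi r -> fmap chi = tsum r.
Proof.
move=> hr; rewrite /fmap; case: pselect => [h|h]; last by exfalso; apply: h; exists r.
exact: WD (proj2_sig (cid h)) hr.
Qed.

Lemma fmapS chi : tg_S H (fmap chi).
Proof. by rewrite /fmap; case: pselect => h; [apply: tsumS | apply: (sg0 hSH)]. Qed.

Lemma fmapD chi1 chi2 : dual_S R HomZN chi1 -> dual_S R HomZN chi2 ->
  fmap (chi1 + chi2) = fmap chi1 + fmap chi2.
Proof.
move=> /dual_rep [r1 h1] /dual_rep [r2 h2].
rewrite (fmapE h1) (fmapE h2) (fmapE (rep_okD h1 h2)).
by rewrite /tsum /rcat /= (sum_catf (fun x z => t x z)).
Qed.

Lemma fmap_dmap x z : fmap (dmap x z) = t x z.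
Proof. by rewrite (fmapE (dmap_rep x z)) /tsum /= big_ord1. Qed.

Lemma KEY xi k chi : character R H xi -> hom_ZN_Z k ->
  (forall x z, xi (t x z) = z *~ k x) -> dual_S R HomZN chi -> xi (fmap chi) = chi k.
Proof.
move=> cxi hk hkx /dual_rep [r hr].
by rewrite (fmapE hr) (xi_tsum r cxi hkx) hr.
Qed.

End Dual.

Lemma big_q (r D q : int) (k : nat) : k%:Z <= `|r| -> 2 * `|r| + 1 <= D -> k%:Z <= `|r + D * q|.
Proof. move=> h1 h2. have [->|q0] := eqVneq q 0. rewrite mulr0 addr0 //. nia. Qed.

Lemma big_r (s a D : int) (k : nat) : 1 <= D -> a != 0 -> k%:Z <= `|s + D * (`|s| + k%:Z) * a|.
Proof.
move=> h1 h2.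
have hc : `|s| + k%:Z <= D * (`|s| + k%:Z) by nia.
have ha : 1 <= `|a| by lia.
have : `|D * (`|s| + k%:Z) * a| = D * (`|s| + k%:Z) * `|a|.
  by rewrite normrM (ger0_norm (x := D * _)) //; nia.
nia.
Qed.

Lemma vMn (f : Vz) n x : (f *+ n) x = f x *+ n. Proof. by rewrite natmulfctE. Qed.
Lemma vMz (f : Vz) (k : int) x : (f *~ k) x = f x * k.
Proof.
rewrite -mulrzz; case: k => n; first by rewrite -!pmulrn vMn.
by rewrite NegzE !mulrNz vN -!pmulrn vMn.
Qed.

Definition tail (N : nat) (x : Vz) := forall i, (i < N)%N -> x i = 0.

Section Specker.
Variable K : set Hm.
Hypothesis KH : forall phi, K phi -> hom_ZN_Z phi.
Hypothesis Kb : forall x, exists M : nat, forall phi, K phi -> `|phi x| <= M%:Z.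

Section Construction.
Variables (Phi : nat -> Hm) (Y : nat -> Vz).

Fixpoint st (k : nat) : int * Vz :=
  match k with
  | 0 => (1, 0)
  | k'.+1 =>
    let D := (st k').1 in let P := (st k').2 in
    let s := Phi k' P in
    let c := D * (`|s| + k'%:Z) in
    let r := s + c * Phi k' (Y k') in
    (D * (2 * `|r| + 1), P + Y k' *~ c)
  end.

Definition Dk k := (st k).1.
Definition Pk k := (st k).2.
Definition ck k := Dk k * (`|Phi k (Pk k)| + k%:Z).
Definition rk k := Phi k (Pk k) + ck k * Phi k (Y k).

Lemma DkS k : Dk k.+1 = Dk k * (2 * `|rk k| + 1). Proof. by []. Qed.
Lemma PkS k : Pk k.+1 = Pk k + Y k *~ ck k. Proof. by []. Qed.

Lemma Dk_ge1 k : 1 <= Dk k.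
Proof. elim: k => [|k IH] //; rewrite DkS; nia. Qed.

Lemma Dk_dvd k m : (k <= m)%N -> (Dk k %| Dk m)%Z.
Proof.
elim: m => [|m IH]; first by rewrite leqn0 => /eqP ->.
rewrite leq_eqVlt => /orP [/eqP ->|]; first exact: dvdzz.
rewrite ltnS => /IH h; rewrite DkS; exact: dvdz_mulr.
Qed.

Lemma Dk_dvd_c k m : (k <= m)%N -> (Dk k %| ck m)%Z.
Proof. by move=> h; rewrite /ck; apply: dvdz_mulr; apply: Dk_dvd. Qed.

Hypothesis Ytail : forall k, tail k (Y k).

Lemma Pk_stable i m : (i < m)%N -> Pk m i = Pk i.+1 i.
Proof.
elim: m => [//|m IH]; rewrite ltnS leq_eqVlt => /orP [/eqP ->//|h].
by rewrite PkS vD vMz (Ytail h) IH // mul0r addr0.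
Qed.

Definition xlim : Vz := fun i => Pk i.+1 i.

Lemma xlim_dvd k i : (Dk k.+1 %| xlim i - Pk k.+1 i)%Z.
Proof.
have gen : forall m, (k.+1 <= m)%N -> (Dk k.+1 %| Pk m i - Pk k.+1 i)%Z.
  elim=> [//|m IH]; rewrite leq_eqVlt => /orP [/eqP ->|h]; first by rewrite subrr dvdz0.
  rewrite PkS vD vMz -addrAC; apply: rpredD; first by apply: IH.
  by apply: dvdz_mull; apply: Dk_dvd_c.
rewrite /xlim -(Pk_stable (m := maxn i.+1 k.+1)); last by rewrite leq_max ltnS leqnn.
by apply: gen; rewrite leq_max leqnn orbT.
Qed.

Lemma xlim_decomp k : exists w : Vz, xlim = Pk k.+1 + w *~ Dk k.+1.
Proof.
exists (fun i => ((xlim i - Pk k.+1 i) %/ Dk k.+1)%Z).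
apply: funext => i; rewrite vD vMz divzK; last exact: xlim_dvd.
by rewrite addrC subrK.
Qed.

Lemma Phi_xlim k : hom_ZN_Z (Phi k) -> Phi k (Y k) != 0 -> k%:Z <= `|Phi k xlim|.
Proof.
move=> hk nz; have [w ->] := xlim_decomp k.
rewrite hk (phiMz hk) PkS hk (phiMz hk).
rewrite (_ : Phi k (Pk k) + Phi k (Y k) * ck k = rk k); last by rewrite /rk mulrC.
rewrite (mulrC (Phi k w)); apply: big_q; last by rewrite DkS; have := Dk_ge1 k; nia.
by rewrite /rk /ck; apply: big_r => //; apply: Dk_ge1.
Qed.

End Construction.

Lemma specker_K : exists N, forall phi, K phi -> forall x, tail N x -> phi x = 0.
Proof.
apply: contrapT => hne.
have ex : forall N, exists p : Hm * Vz, K p.1 /\ tail N p.2 /\ p.1 p.2 != 0.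
  move=> N; apply: contrapT => hn; apply: hne; exists N => phi Kphi x tx.
  apply: contrapT => nz; apply: hn; exists (phi, x); split => //; split => //.
  exact/eqP.
have [F hF] := choice ex.
pose Phi k := (F k).1; pose Y k := (F k).2.
have Yt : forall k, tail k (Y k) by move=> k; case: (hF k) => _ [].
have [M hM] := Kb (xlim Phi Y).
have := @Phi_xlim Phi Y Yt M.+1 (KH (hF M.+1).1) (hF M.+1).2.2.
have := hM _ (hF M.+1).1; rewrite /Phi /=.
move=> h1 h2; have := le_trans h2 h1; rewrite lez_nat ltnn.
by [].
Qed.

End Specker.

Lemma In_seqP i s l : List.In i (List.seq s l) <-> (s <= i < s + l)%N.
Proof.
rewrite List.in_seq; split.
  by move=> [/ssrnat.leP h1 /ssrnat.ltP h2]; rewrite h1 h2.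
by move=> /andP [/ssrnat.leP h1 /ssrnat.ltP h2].
Qed.

Lemma compact_bnd (K : set Hm) x : is_compact HomZN K ->
  exists M : nat, forall phi, K phi -> `|phi x| <= M%:Z.
Proof.
move=> [KS Kc].
pose Om (m : nat) : set Hm := [set phi | hom_ZN_Z phi /\ `|phi x| < m%:Z].
pose F := [set O | exists m, O = Om m].
have FO : F `<=` tg_open HomZN.
  move=> O [m ->]; split; first by move=> phi [].
  move=> phi [hphi hlt]; exists 1%N, (fun _ => x) => psi hpsi heq; split => //.
  by rewrite (heq 0%N).
have cov : K `<=` \bigcup_(U in F) U.
  move=> phi Kphi; exists (Om `|phi x|.+1%N); first by exists `|phi x|.+1%N.
  split; first exact: KS.
  rewrite -[X in X < _]gez0_abs ?normr_ge0 // ltz_nat; lia.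
have [n [f [hf hK]]] := Kc F FO cov.
have [M hM] : exists M : nat, forall i, (i < n)%N -> f i `<=` Om M.
  elim: n hf {hK} => [|n IH] hf; first by exists 0%N.
  have [M hM] := IH (fun i hi => hf i (ltnW hi)).
  have [m hm] := hf n (ltnSn n).
  exists (maxn M m) => i; rewrite ltnS leq_eqVlt => /orP [/eqP ->|hi] phi.
    rewrite hm => -[h1 h2]; split => //; apply: (lt_le_trans h2); rewrite lez_nat leq_maxr //.
  move=> /(hM i hi) [h1 h2]; split => //; apply: (lt_le_trans h2); rewrite lez_nat leq_maxl //.
exists M => phi Kphi; have [i hi fi] := hK phi Kphi.
by have [_ h] := hM i hi phi fi; apply: ltW.
Qed.

Lemma bnd_unif (K : set Hm) (g : nat -> Vz) N : is_compact HomZN K ->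
  exists M : nat, forall i phi, (i < N)%N -> K phi -> `|phi (g i)| <= M%:Z.
Proof.
move=> Kc; elim: N => [|N [M hM]]; first by exists 0%N.
have [m hm] := compact_bnd (g N) Kc.
exists (maxn M m) => i phi; rewrite ltnS leq_eqVlt => /orP [/eqP ->|hi] Kphi.
  by apply: (le_trans (hm _ Kphi)); rewrite lez_nat leq_maxr.
by apply: (le_trans (hM _ _ hi Kphi)); rewrite lez_nat leq_maxl.
Qed.

Definition rng (M : nat) : seq int := List.map (fun i : nat => i%:Z - M%:Z) (List.seq 0 (M + M).+1).

Lemma in_rng M a : `|a| <= M%:Z -> List.In a (rng M).
Proof.
move=> ha; apply/List.in_map_iff; exists (absz (a + M%:Z)); split.
  by rewrite gez0_abs; [ring | lia].
by apply/In_seqP; rewrite add0n; apply/andP; split => //; lia.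
Qed.

Fixpoint vecs (N M : nat) : seq (seq int) :=
  match N with
  | 0 => [:: [::]]
  | N'.+1 => List.flat_map (fun a => List.map (cons a) (vecs N' M)) (rng M)
  end.

Lemma in_vecs M (v : seq int) : (forall a, List.In a v -> `|a| <= M%:Z) ->
  List.In v (vecs (size v) M).
Proof.
elim: v => [|a v IH] hv; first by left.
apply: (proj2 (List.in_flat_map (fun a => List.map (cons a) (vecs (size v) M)) (rng M) _)); exists a; split; first by apply: in_rng; apply: hv; left.
by apply/List.in_map_iff; exists v; split => //; apply: IH => b hb; apply: hv; right.
Qed.

Definition qv (v : seq int) : Hm := fun x => \sum_(i < size v) x i * nth 0 v i.

Lemma qv_hom v : hom_ZN_Z (qv v).
Proof. by move=> x y; rewrite /qv -big_split /=; apply: eq_bigr => i _; rewrite vD mulrDl. Qed.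

Definition ev (i : nat) : Vz := fun j => (j == i)%:Z.
Definition trunc (N : nat) (x : Vz) : Vz := fun j => if (j < N)%N then x j else 0.

Lemma trunc_sum phi N x : hom_ZN_Z phi ->
  phi (trunc N x) = \sum_(i < N) x i * phi (ev i).
Proof.
move=> hphi; elim: N => [|N IH].
  rewrite big_ord0 (_ : trunc 0 x = 0) ?phi0 //; exact: funext.
have -> : trunc N.+1 x = trunc N x + ev N *~ x N.
  apply: funext => j; rewrite vD vMz /trunc /ev ltnS leq_eqVlt.
  have [->|ne] := eqVneq j N; first by rewrite ltnn /= add0r mul1r.
  by rewrite /= mul0r addr0.
by rewrite hphi IH (phiMz hphi) big_ord_recr /= mulrC.
Qed.

Lemma nth_List {A} (d : A) s i : nth d s i = List.nth i s d.
Proof. by elim: s i => [|a s IH] [|i] //=. Qed.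

Lemma size_List {A} (s : seq A) : size s = List.length s.
Proof. by elim: s => //= a s ->. Qed.

Lemma phi_qv phi N : hom_ZN_Z phi -> (forall x, tail N x -> phi x = 0) ->
  phi = qv (List.map (fun i => phi (ev i)) (List.seq 0 N)).
Proof.
move=> hphi hN; apply: funext => x.
have ex : x = trunc N x + (x - trunc N x) by rewrite addrC subrK.
rewrite [in LHS]ex.
rewrite hphi (hN (x - trunc N x)); last first.
  by move=> i hi; rewrite vB /trunc hi subrr.
rewrite addr0 trunc_sum // /qv.
have sz : size (List.map (fun i => phi (ev i)) (List.seq 0 N)) = N.
  by rewrite size_List List.length_map List.length_seq.
have nthE : forall i, (i < N)%N -> nth 0 (List.map (fun i => phi (ev i)) (List.seq 0 N)) i = phi (ev i).
  move=> i hi; rewrite nth_List.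
  rewrite (List.nth_indep _ 0 (phi (ev 0))); last by rewrite List.length_map List.length_seq; apply/ssrnat.ltP.
  by rewrite List.map_nth List.seq_nth //; apply/ssrnat.ltP.
rewrite sz; apply: eq_bigr => i _; by rewrite nthE.
Qed.

Lemma compact_fin K : is_compact HomZN K ->
  exists N M, forall phi, K phi -> exists v, List.In v (vecs N M) /\ phi = qv v.
Proof.
move=> Kc; have KS := Kc.1.
have [N hN] := specker_K KS (fun x => compact_bnd x Kc).
have [M hM] := bnd_unif ev N Kc.
exists N, M => phi Kphi.
pose v := List.map (fun i => phi (ev i)) (List.seq 0 N).
exists v; split; last exact: phi_qv (KS _ Kphi) (hN _ Kphi).
have sz : size v = N by rewrite size_List List.length_map List.length_seq.
rewrite -{1}sz; apply: in_vecs => a /List.in_map_iff [i [<- /In_seqP hi]].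
by apply: hM.
Qed.

Section Pnbhd.
Variable R : realType.
Notation T := (torus R).

Definition good (L : seq (Hm * set T)) :=
  forall p, List.In p L -> hom_ZN_Z p.1 /\ torus_open R p.2.

Lemma singleton_compact q : hom_ZN_Z q -> is_compact HomZN [set q].
Proof.
move=> hq; split; first by move=> y ->.
move=> F FO cov; have [U FU Uq] := cov q erefl.
exists 1%N, (fun _ => U); split => // y ->; exists 0%N => //.
Qed.

Lemma open_of_pnbhd (W : set (Hm -> T)) : W `<=` dual_S R HomZN ->
  (forall chi, W chi -> exists L, good L /\ (forall p, List.In p L -> p.2 (chi p.1)) /\
     forall psi, dual_S R HomZN psi -> (forall p, List.In p L -> p.2 (psi p.1)) -> W psi) ->
  compact_open R HomZN W.
Proof.
move=> WS H; split => // chi Wchi.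
have [L [gL [cL pL]]] := H chi Wchi.
pose d : Hm * set T := (0, setT).
exists (List.length L), (fun i => [set (List.nth i L d).1]), (fun i => (List.nth i L d).2).
split.
  move=> i hi; have hin := List.nth_In L d (ssrnat.ltP hi).
  have [h1 h2] := gL _ hin.
  split => //; first exact: singleton_compact.
  by move=> y [x -> <-]; apply: cL.
move=> psi dpsi hpsi; apply: pL => // p hp.
have [i [hi <-]] := List.In_nth L p d hp.
by apply: (hpsi i); [apply/ssrnat.ltP | exists (List.nth i L d).1].
Qed.

Lemma pnbhd_of_open (W : set (Hm -> T)) chi : compact_open R HomZN W -> W chi ->
  exists L, good L /\ (forall p, List.In p L -> p.2 (chi p.1)) /\
     forall psi, dual_S R HomZN psi -> (forall p, List.In p L -> p.2 (psi p.1)) -> W psi.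
Proof.
move=> [WS Wo] Wchi; have [n [K [U [hKU hall]]]] := Wo chi Wchi.
have ex : forall i, exists NM : nat * nat, (i < n)%N ->
    forall phi, K i phi -> exists v, List.In v (vecs NM.1 NM.2) /\ phi = qv v.
  move=> i; case: (ltnP i n) => hi.
    have [hc _ _] := hKU i hi; have [N [M h]] := compact_fin hc.
    by exists (N, M).
  by exists (0%N, 0%N).
have [g hg] := choice ex.
pose L := List.flat_map (fun i => List.map (fun v => (qv v, [set z | K i (qv v) -> U i z]))
   (vecs (g i).1 (g i).2)) (List.seq 0 n).
have inL : forall p, List.In p L -> exists i v, (i < n)%N /\ p = (qv v, [set z | K i (qv v) -> U i z]).
  move=> p /List.in_flat_map [i [/In_seqP hi /List.in_map_iff [v [<- _]]]].
  by exists i, v; split.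
exists L; split; last split.
- move=> p /inL [i [v [hi ->]]]; split; first exact: qv_hom.
  have [_ oU _] := hKU i hi.
  case: (pselect (K i (qv v))) => hK x /= hx.
    have [e [e0 he]] := oU x (hx hK); exists e; split => // y hy _; exact: he.
  by exists 1; split => // y _ /hK.
- move=> p /inL [i [v [hi ->]]] /= hK.
  have [_ _ hc] := hKU i hi; apply: hc; by exists (qv v).
- move=> psi dpsi hp; apply: hall => // i hi y [phi Kphi <-].
  have [v [hv ephi]] := hg i hi phi Kphi.
  have hin : List.In (qv v, [set z | K i (qv v) -> U i z]) L.
    apply/List.in_flat_map; exists i; split; first by apply/In_seqP.
    by apply/List.in_map_iff; exists v.
  have := hp _ hin; rewrite /= -ephi; by apply.
Qed.

End Pnbhd.

Lemma fBg (A : Type) (M : zmodType) (f g : A -> M) x : (f - g) x = f x - g x. Proof. by []. Qed.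
Lemma fDg (A : Type) (M : zmodType) (f g : A -> M) x : (f + g) x = f x + g x. Proof. by []. Qed.
Lemma f0g (A : Type) (M : zmodType) x : (0 : A -> M) x = 0. Proof. by []. Qed.

Lemma zrearr (M : zmodType) (a b c d : M) : (a - b) - (c - d) = (a - c) - (b - d).
Proof. by rewrite !opprB addrACA [in RHS]addrACA (addrC (- c)). Qed.

Section DualQ.
Variable R : realType.
Notation T := (torus R).
Notation D := (dual R HomZN).

Lemma char_of_vanish (chi : Hm -> T) n (xs : nat -> Vz) :
  is_hom HomZN (TT R) chi ->
  (forall psi, hom_ZN_Z psi -> (forall i, (i < n)%N -> psi (xs i) = 0) -> chi psi = 0) ->
  character R HomZN chi.
Proof.
move=> hh hv; split => // W oW; split; first by move=> phi [].
move=> phi0 [h0 w0]; exists n, xs => psi hpsi heq; split => //.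
have : chi (psi - phi0) = 0.
  by apply: hv; [apply: homZ_B | move=> i hi; rewrite fctB heq // subrr].
rewrite (homB HomZN_subgroup hh) // => /eqP; rewrite subr_eq0 => /eqP e.
change (W (chi psi)); rewrite e; exact: w0.
Qed.

Lemma dual_sub chi1 chi2 : dual_S R HomZN chi1 -> dual_S R HomZN chi2 ->
  dual_S R HomZN (chi1 - chi2).
Proof.
move=> [c1 z1] [c2 z2]; split; last by move=> x hx; rewrite fBg z1 // z2 // subrr.
have [n1 [xs1 h1]] := char_vanish c1.
have [n2 [xs2 h2]] := char_vanish c2.
have hh : is_hom HomZN (TT R) (chi1 - chi2).
  split => // x y hx hy; rewrite !fBg (homD c1.1) // (homD c2.1) // opprD addrACA //.
apply: (@char_of_vanish _ (n1 + n2) (fun i => if (i < n1)%N then xs1 i else xs2 (i - n1)%N)) => //.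
move=> psi hpsi hv; rewrite fBg h1 // ?h2 ?subrr //.
  move=> i hi; have hf : (n1 + i < n1)%N = false by rewrite ltnNge leq_addr.
  by have := hv (n1 + i)%N; rewrite ltn_add2l hi hf addKn; apply.
move=> i hi; have := hv i; rewrite hi; apply; apply: leq_trans hi _; exact: leq_addr.
Qed.

Lemma dual0 : dual_S R HomZN 0.
Proof.
split => //; apply: (@char_of_vanish _ 0 (fun _ => 0)) => //.
by split => // x y _ _; rewrite addr0.
Qed.

Lemma dual_subgroup : is_subgroup D.
Proof. split; [exact: dual0 | move=> x y; exact: dual_sub]. Qed.

Definition pnbhd (L : seq (Hm * set T)) : set (Hm -> T) :=
  [set psi | dual_S R HomZN psi /\ forall p, List.In p L -> p.2 (psi p.1)].

Lemma pnbhd_open L : good L -> compact_open R HomZN (pnbhd L).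
Proof.
move=> gL; apply: open_of_pnbhd; first by move=> chi [].
move=> chi [dchi hchi]; exists L; split => //; split => // psi dpsi h; by split.
Qed.

Lemma dual_topology : is_topology D.
Proof.
split.
- by move=> U [].
- split => // chi hchi; exists 0%N, (fun _ => set0), (fun _ => set0); split => //.
- move=> U V oU oV; apply: open_of_pnbhd; first by move=> chi [/(oU.1)].
  move=> chi [Uc Vc].
  have [L1 [g1 [c1 p1]]] := pnbhd_of_open oU Uc.
  have [L2 [g2 [c2 p2]]] := pnbhd_of_open oV Vc.
  exists (L1 ++ L2)%list; split; last split.
  + by move=> p /List.in_app_iff [h|h]; [apply: g1 | apply: g2].
  + by move=> p /List.in_app_iff [h|h]; [apply: c1 | apply: c2].
  + move=> psi dpsi hp; split.
      by apply: p1 => // p h; apply: hp; apply/List.in_app_iff; left.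
    by apply: p2 => // p h; apply: hp; apply/List.in_app_iff; right.
- move=> F FO; split; first by move=> chi [U FU Uc]; exact: (FO U FU).1 _ Uc.
  move=> chi [U FU Uc]; have [_ h] := FO U FU.
  have [n [K [V [h1 h2]]]] := h chi Uc.
  exists n, K, V; split => // psi dpsi hpsi; exists U => //; exact: h2.
Qed.

Lemma dual_subcont : sub_continuous D.
Proof.
move=> chi1 chi2 W d1 d2 oW Wc.
have [L [gL [cL pL]]] := pnbhd_of_open oW Wc.
have ex : forall p : Hm * set T, exists e : R, List.In p L -> 0 < e /\
    forall y, tabs R (y - (chi1 - chi2) p.1) < e -> p.2 y.
  move=> p; case: (pselect (List.In p L)) => hp; last by exists 0.
  have [_ op] := gL p hp; have [e [e0 he]] := op _ (cL p hp).
  by exists e.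
have [e he] := choice ex.
pose L1 := List.map (fun p => (p.1, tball (chi1 p.1) (e p / 2))) L.
pose L2 := List.map (fun p => (p.1, tball (chi2 p.1) (e p / 2))) L.
have gL12 : forall c, good (List.map (fun p => (p.1, tball (c p.1) (e p / 2))) L).
  move=> c q /List.in_map_iff [p [<- hp]]; split; first exact: (gL p hp).1.
  exact: tball_open.
exists (pnbhd L1), (pnbhd L2); split.
- exact: pnbhd_open (gL12 chi1).
- exact: pnbhd_open (gL12 chi2).
- split => // q /List.in_map_iff [p [<- hp]] /=; rewrite /tball /= subrr tabs0.
  by have [e0 _] := he p hp; lra.
- split => // q /List.in_map_iff [p [<- hp]] /=; rewrite /tball /= subrr tabs0.
  by have [e0 _] := he p hp; lra.
move=> u v [du hu] [dv hv]; apply: pL; first exact: dual_sub.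
move=> p hp; have [e0 hy] := he p hp; apply: hy.
have h1 := hu (p.1, tball (chi1 p.1) (e p / 2)) (List.in_map _ _ _ hp).
have h2 := hv (p.1, tball (chi2 p.1) (e p / 2)) (List.in_map _ _ _ hp).
rewrite /tball /= in h1 h2.
have -> : (u - v) p.1 - (chi1 - chi2) p.1 = (u p.1 - chi1 p.1) - (v p.1 - chi2 p.1).
  by rewrite !fBg zrearr.
have := tabsD (u p.1 - chi1 p.1) (- (v p.1 - chi2 p.1)); rewrite tabsN; lra.
Qed.

Lemma dual_hausdorff : hausdorff D.
Proof.
move=> chi1 chi2 d1 d2 ne.
have [phi nphi] : exists phi, chi1 phi <> chi2 phi.
  apply: contrapT => h; apply: ne; apply: funext => phi; apply: contrapT => h'.
  by apply: h; exists phi.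
have hphi : hom_ZN_Z phi.
  apply: contrapT => hn; apply: nphi; by rewrite d1.2 // d2.2.
pose a := chi1 phi; pose b := chi2 phi.
have hab : 0 < tabs R (a - b).
  rewrite lt_neqAle tabs_ge0 andbT; apply/negP => /eqP/esym/tabs_eq0/eqP.
  by rewrite subr_eq0 => /eqP.
pose e := tabs R (a - b) / 2.
have gg : forall c, good [:: (phi, tball c e)].
  by move=> c p [<-|//]; split => //; apply: tball_open.
exists (pnbhd [:: (phi, tball a e)]), (pnbhd [:: (phi, tball b e)]); split.
- exact: pnbhd_open.
- exact: pnbhd_open.
- split => // p [<-|//] /=; rewrite /tball /= subrr tabs0 /e; lra.
- split => // p [<-|//] /=; rewrite /tball /= subrr tabs0 /e; lra.
apply/seteqP; split => // psi [[_ h1] [_ h2]].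
have := h1 _ (or_introl erefl); have := h2 _ (or_introl erefl).
rewrite /tball /= => t2 t1.
have := tabs_triang a (psi phi) b; rewrite tabsB in t1; rewrite /e in t1 t2; lra.
Qed.

Lemma ev_char q : hom_ZN_Z q -> character R D (fun chi => chi q).
Proof.
move=> hq; split; first by split.
move=> W oW; apply: open_of_pnbhd; first by move=> chi [].
move=> chi [dchi Wc]; exists [:: (q, W)]; split; last split.
- by move=> p [<-|//].
- by move=> p [<-|//].
- move=> psi dpsi hp; split => //; exact: (hp _ (or_introl erefl)).
Qed.

Lemma dual_lqc : loc_quasi_convex R D.
Proof.
move=> W oW W0.
have [L [gL [cL pL]]] := pnbhd_of_open oW W0.
have ex : forall p : Hm * set T, exists m : nat, List.In p L -> (0 < m)%N /\
    forall w : T, m%:R * tabs R w <= 4^-1 -> p.2 w.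
  move=> p; case: (pselect (List.In p L)) => hp; last by exists 0%N.
  have [_ op] := gL p hp; have [e [e0 he]] := op _ (cL p hp).
  have [n hn] := archi_gt ((4 * e)^-1).
  exists n.+1 => _; split => // w hw; apply: he; rewrite /= f0g subr0.
  have h4e : 0 < 4 * e by lra.
  have hin : (4 * e)^-1 * e = 4^-1 by field; lra.
  have hn1 : (n.+1%:R : R) = n%:R + 1 by rewrite -addn1 natrD.
  have hw0 := tabs_ge0 w.
  have hn0 : (0 : R) <= n%:R by [].
  have h1 : 4^-1 < (n%:R + 1) * e by nra.
  rewrite hn1 in hw; rewrite ltNge; apply/negP => hte; nra.
have [mm hmm] := choice ex.
pose Q := List.flat_map (fun p => List.map (fun l => p.1 *+ l) (List.seq 1 (mm p))) L.
have inQ : forall q, List.In q Q -> hom_ZN_Z q.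
  move=> q /List.in_flat_map [p [hp /List.in_map_iff [l [<- _]]]].
  exact: homZ_Mn (gL p hp).1.
pose A := [set psi | dual_S R HomZN psi /\ forall q, List.In q Q -> tabs R (psi q) <= 4^-1].
exists A; split.
- split; first by move=> psi [].
  move=> chi dchi nA.
  have [q [hq hlt]] : exists q, List.In q Q /\ 4^-1 < tabs R (chi q).
    apply: contrapT => h; apply: nA; split => // q hq; rewrite leNgt; apply/negP => hl.
    by apply: h; exists q.
  exists (fun chi => chi q); split => //; first exact: ev_char (inQ q hq).
  by move=> a [_ ha]; apply: ha.
- move=> psi [dpsi hpsi]; apply: pL => // p hp.
  have [m0 hm] := hmm p hp; apply: hm.
  apply: tmult => // l l0 lm.
  rewrite -(homMn HomZN_subgroup dpsi.1.1) //; last exact: (gL p hp).1.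
  apply: hpsi; apply/List.in_flat_map; exists p; split => //.
  apply/List.in_map_iff; exists l; split => //; apply/In_seqP.
  by rewrite l0 /= add1n ltnS.
- pose L' := List.map (fun q => (q, tball (0 : T) (4^-1))) Q.
  have gL' : good L'.
    move=> p /List.in_map_iff [q [<- hq]]; split; [exact: inQ | exact: tball_open].
  exists (pnbhd L'); split.
  + exact: pnbhd_open.
  + split; first exact: dual0.
    move=> p /List.in_map_iff [q [<- hq]]; rewrite /tball /= f0g subrr tabs0; lra.
  + move=> psi [dpsi hp]; split => // q hq.
    have := hp _ (List.in_map (fun q => (q, tball (0 : T) (4^-1))) _ _ hq).
    by rewrite /tball /= subr0 => /ltW.
Qed.

Lemma dual_inQ : in_Q R D.
Proof.
split; last exact: dual_lqc; last exact: dual_hausdorff.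
split; [exact: dual_subgroup | exact: dual_topology | exact: dual_subcont].
Qed.

End DualQ.

Section Bihom.
Variable R : realType.
Notation T := (torus R).
Notation D := (dual R HomZN).

Lemma dmap_dual x (z : T) : dual_S R HomZN (dmap x z).
Proof.
split; last by move=> phi hphi; rewrite dmapN.
apply: (@char_of_vanish _ _ 1%N (fun _ => x)).
  split => // phi psi hphi hpsi; rewrite !dmapE //; last exact: homZ_D.
  by rewrite fctD mulrzDr.
by move=> psi hpsi hv; rewrite dmapE // (hv 0%N) // mulr0z.
Qed.

Lemma supp_one q : hom_ZN_Z q -> exists N, forall x, tail N x -> q x = 0.
Proof.
move=> hq.
have KH : forall phi, [set q] phi -> hom_ZN_Z phi by move=> phi ->.
have Kb : forall x, exists M : nat, forall phi, [set q] phi -> `|phi x| <= M%:Z.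
  by move=> x; exists (absz (q x)) => phi ->; rewrite -abszE.
have [N hN] := specker_K KH Kb.
by exists N; apply: hN.
Qed.

Lemma tail_mono N N' x : (N <= N')%N -> tail N' x -> tail N x.
Proof. by move=> h t i hi; apply: t; apply: leq_trans h. Qed.

Lemma supp_list (L : seq (Hm * set T)) : good L ->
  exists N, forall p, List.In p L -> forall x, tail N x -> p.1 x = 0.
Proof.
elim: L => [|p L IH] gL; first by exists 0%N.
have [N hN] := IH (fun q hq => gL q (or_intror hq)).
have [N' hN'] := supp_one (gL p (or_introl erefl)).1.
exists (maxn N N') => q [<-|hq] x tx.
  by apply: hN'; apply: tail_mono tx; apply: leq_maxr.
by apply: hN => //; apply: tail_mono tx; apply: leq_maxl.
Qed.

Lemma tail_eq phi N x y : hom_ZN_Z phi -> (forall z, tail N z -> phi z = 0) ->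
  (forall i, (i < N)%N -> x i = y i) -> phi x = phi y.
Proof.
move=> hphi hN heq; apply/eqP; rewrite -subr_eq0 -(phiB hphi); apply/eqP; apply: hN.
by move=> i hi; rewrite vB heq // subrr.
Qed.

Lemma mulz_open (U : set T) (a : int) : torus_open R U -> torus_open R [set z | U (z *~ a)].
Proof.
move=> oU z0 /= hz0; have [e [e0 he]] := oU _ hz0.
have ha : 0 < `|a%:~R : R| + 1 by have := normr_ge0 (a%:~R : R); lra.
exists (e / (`|a%:~R| + 1)); split; first exact: divr_gt0.
move=> y hy; apply: he; rewrite -mulrzBl.
apply: le_lt_trans (tabs_mulz _ _) _.
have h0 := tabs_ge0 (y - z0).
have : tabs R (y - z0) * (`|a%:~R| + 1) < e by rewrite -ltr_pdivlMr.
nra.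
Qed.

Lemma finter_open (L : seq (Hm * set T)) (P : Hm * set T -> set T) :
  (forall p, List.In p L -> torus_open R (P p)) ->
  torus_open R [set z | forall p, List.In p L -> P p z].
Proof.
elim: L => [|p L IH] hL z hz.
  by exists 1; split => // y _ p [].
have [e1 [e10 h1]] := hL p (or_introl erefl) z (hz p (or_introl erefl)).
have [e2 [e20 h2]] := IH (fun q hq => hL q (or_intror hq)) z (fun q hq => hz q (or_intror hq)).
exists (Num.min e1 e2); split; first by rewrite lt_min e10 e20.
move=> y; rewrite lt_min => /andP [hy1 hy2] q [<-|hq].
  by apply: h1.
by apply: (h2 y).
Qed.
Lemma dmapD2 x (z1 z2 : T) : dmap x (z1 + z2) = dmap x z1 + dmap x z2.
Proof.
apply: funext => phi; rewrite fDg; case: (pselect (hom_ZN_Z phi)) => h.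
  by rewrite !dmapE // mulrzDl.
by rewrite !dmapN // addr0.
Qed.

Lemma dmapD1 x y (z : T) : dmap (x + y) z = dmap x z + dmap y z.
Proof.
apply: funext => phi; rewrite fDg; case: (pselect (hom_ZN_Z phi)) => h.
  by rewrite !dmapE // h mulrzDr.
by rewrite !dmapN // addr0.
Qed.

Lemma dmap_bihom : cont_bihom ZN (TT R) D (@dmap R).
Proof.
split.
- move=> g _; split.
    by split; [move=> z _; exact: dmap_dual | move=> z1 z2 _ _; exact: dmapD2].
  move=> W oW z0 [_ Wz0].
  have [L [gL [cL pL]]] := pnbhd_of_open oW Wz0.
  have oI := @finter_open L (fun p => [set z | p.2 (z *~ p.1 g)])
     (fun p hp => @mulz_open p.2 (p.1 g) (gL p hp).2).
  have hz0 : forall p, List.In p L -> p.2 (z0 *~ p.1 g).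
    by move=> p hp; have := cL p hp; rewrite dmapE //; exact: (gL p hp).1.
  have [e [e0 he]] := oI z0 hz0.
  exists e; split => // y hy; split => //; apply: pL; first exact: dmap_dual.
  by move=> p hp; rewrite dmapE; [apply: he | exact: (gL p hp).1].
- move=> h _; split.
    by split; [move=> x _; exact: dmap_dual | move=> x y _ _; exact: dmapD1].
  move=> W oW x0 [_ Wx0].
  have [L [gL [cL pL]]] := pnbhd_of_open oW Wx0.
  have [N hN] := supp_list gL.
  exists N => g hg; split => //; apply: pL; first exact: dmap_dual.
  move=> p hp; have hp1 := (gL p hp).1.
  rewrite dmapE // (@tail_eq p.1 N g x0) //; last exact: hN.
  by have := cL p hp; rewrite dmapE.
- move=> W oW W0.
  have [L [gL [cL pL]]] := pnbhd_of_open oW W0.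
  have [N hN] := supp_list gL.
  exists (tail N), setT; split.
  + move=> f tf; exists N => g hg i hi; rewrite hg //; exact: tf.
  + by move=> x _; exists 1; split.
  + by move=> i.
  + by [].
  + move=> u v tu _; apply: pL; first exact: dmap_dual.
    move=> p hp; have hp1 := (gL p hp).1.
    rewrite dmapE // hN // mulr0z.
    by have := cL p hp; rewrite dmapE // mul0rz.
Qed.

End Bihom.

Lemma fin_of_bounds phi N M : hom_ZN_Z phi -> (forall x, tail N x -> phi x = 0) ->
  (forall i, (i < N)%N -> `|phi (ev i)| <= M%:Z) ->
  exists v, List.In v (vecs N M) /\ phi = qv v.
Proof.
move=> hphi hN hM.
pose v := List.map (fun i => phi (ev i)) (List.seq 0 N).
exists v; split; last exact: phi_qv hphi hN.
have sz : size v = N by rewrite size_List List.length_map List.length_seq.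
rewrite -{1}sz; apply: in_vecs => a /List.in_map_iff [i [<- /In_seqP hi]].
by apply: hM.
Qed.

Lemma unif_nat (N : nat) (P : nat -> nat -> Prop) :
  (forall i m m', (m <= m')%N -> P i m -> P i m') ->
  (forall i, (i < N)%N -> exists m, P i m) -> exists M, forall i, (i < N)%N -> P i M.
Proof.
move=> mono; elim: N => [|N IH] h; first by exists 0%N.
have [M hM] := IH (fun i hi => h i (ltnW hi)).
have [m hm] := h N (ltnSn N).
exists (maxn M m) => i; rewrite ltnS leq_eqVlt => /orP [/eqP ->|hi].
  by apply: mono hm; apply: leq_maxr.
by apply: mono (hM i hi); apply: leq_maxl.
Qed.

Section Final.
Variable R : realType.
Notation T := (torus R).
Notation D := (dual R HomZN).
Variable H : tgrp.
Variable t : Vz -> T -> tg_V H.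
Hypothesis hQ : in_Q R H.
Hypothesis hb : cont_bihom ZN (TT R) H t.

Lemma fmap_cont : is_cont D H (fmap t).
Proof.
move=> W oW; apply: open_of_pnbhd; first by move=> chi [].
move=> chi0 [d0 W0].
have hsg := hSH hQ.
have W0' : W (fmap t chi0 - 0) by rewrite subr0.
have [U [V [oU oV U0 V0 UV]]] := hSubH hQ (fmapS hQ hb chi0) (sg0 hsg) oW W0'.
have [_ _ hlqc] := hQ.
have [A [[AS Aq] AV [V2 [oV2 V20 V2A]]]] := hlqc V oV V0.
have t00 : t 0 0 = 0 := hom0 (TT_subgroup R) (t_hom1 hb 0).1.
have [_ _ hjoint] := hb.
have V2t : V2 (t 0 0) by rewrite t00.
have [UZ [VT [oUZ oVT UZ0 VT0 hUV]]] := hjoint V2 oV2 V2t.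
have [N hN] := oUZ 0 UZ0.
have tailU : forall x, tail N x -> UZ x by move=> x tx; apply: hN => i hi; rewrite tx.
have [del [del0 hdel]] := oVT 0 VT0.
have ex : forall i, exists d : R, (i < N)%N -> 0 < d /\
    forall z, tabs R z < d -> V2 (t (ev i) z).
  move=> i; case: (ltnP i N) => hi; last by exists 0.
  have [_ hc] := t_hom1 hb (ev i).
  have o := hc _ oV2.
  have ti0 : t (ev i) 0 = 0 := hom0 (TT_subgroup R) (t_hom1 hb (ev i)).1.
  have m0 : (setT `&` t (ev i) @^-1` V2) 0 by split => //; rewrite /preimage /= ti0.
  have [d [d00 hd]] := o 0 m0.
  exists d => _; split => // z hz.
  have := hd z; rewrite subr0 => /(_ hz) [_ h]; exact: h.
have [dd hdd] := choice ex.
have exM : forall i, (i < N)%N -> exists m : nat,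
    forall a : int, `|a%:~R : R| * dd i <= 2^-1 -> `|a| <= m%:Z.
  move=> i hi; have [d0' _] := hdd i hi.
  have [m hm] := archi_gt (2^-1 / dd i).
  exists m => a ha; rewrite -(ler_int R) intr_norm.
  apply: ltW; apply: le_lt_trans hm; rewrite ler_pdivlMr //.
pose P := fun i m => forall a : int, `|a%:~R : R| * dd i <= 2^-1 -> `|a| <= m%:Z.
have mono : forall i m m', (m <= m')%N -> P i m -> P i m'.
  by move=> i m m' hmm h a ha; apply: le_trans (h a ha) _; rewrite lez_nat.
have [M hM] := @unif_nat N P mono exM.
have KC : forall xi, character R H xi -> (forall a, A a -> tabs R (xi a) <= 4^-1) ->
    exists k, hom_ZN_Z k /\ (forall x z, xi (t x z) = z *~ k x) /\
      exists v, List.In v (vecs N M) /\ k = qv v.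
  move=> xi cxi hA.
  have [k [hk hkx]] := kxi hb cxi.
  exists k; split => //; split => //.
  apply: fin_of_bounds => //.
    move=> x tx; apply: (tzero_mult del0) => m.
    apply: (tbound del0) => z hz.
    rewrite -(phiMz hk) -hkx; apply: hA; apply: V2A; apply: hUV.
      by apply: tailU => i hi; rewrite vMz tx // mul0r.
    by apply: hdel; rewrite subr0.
  move=> i hi; apply: (hM i hi); have [d00 hd] := hdd i hi.
  apply: (tbound d00) => z hz; rewrite -hkx; apply: hA; apply: V2A; exact: hd.
pose L := List.map (fun v => (qv v, tball (chi0 (qv v)) (4^-1))) (vecs N M).
exists L; split; last split.
- move=> p /List.in_map_iff [v [<- _]]; split; [exact: qv_hom | exact: tball_open].
- move=> p /List.in_map_iff [v [<- _]]; rewrite /tball /= subrr tabs0; lra.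
move=> psi dpsi hp; split => //.
have dsub : dual_S R HomZN (chi0 - psi) by apply: dual_sub.
pose y := fmap t (chi0 - psi).
have Ay : A y.
  apply: contrapT => nA.
  have [xi [cxi hbA hlt]] := Aq y (fmapS hQ hb _) nA.
  have [k [hk [hkx [v [hv ek]]]]] := KC xi cxi hbA.
  move: hlt; rewrite /y (KEY hQ hb cxi hk hkx dsub) ek fBg.
  have := hp _ (List.in_map (fun v => (qv v, tball (chi0 (qv v)) (4^-1))) _ _ hv).
  rewrite /tball /= tabsB; lra.
have e : fmap t chi0 = y + fmap t psi.
  by rewrite /y -(fmapD hQ hb dsub dpsi) subrK.
have := UV _ _ U0 (AV _ Ay); rewrite e addrC addKr.
by [].
Qed.

End Final.

Theorem final (R : realType) (H : tgrp) (t : tg_V ZN -> tg_V (TT R) -> tg_V H) :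
  is_Q_tensor R ZN (TT R) H t -> top_iso (dual R HomZN) H.
Proof.
move=> [hQ hb univ].
have hsg := hSH hQ.
have [g [cg hgt _]] := univ (dual R HomZN) (@dmap R) (dual_inQ R) (dmap_bihom R).
have cf : cont_hom (dual R HomZN) H (fmap t).
  split; last exact: fmap_cont.
  split; first by move=> chi _; exact: fmapS.
  by move=> chi1 chi2 d1 d2; apply: fmapD.
exists (fmap t), g; split => //.
- move=> chi dchi; have [r hr] := dual_rep dchi.
  rewrite (fmapE hQ hb hr) /tsum (@homSum _ _ _ hsg cg.1 r.1.1 (fun i => t (r.1.2 i) (r.2 i))); last first.
    by move=> i _; apply: tS.
  under eq_bigr => i _ do rewrite hgt //.
  apply: funext => phi; rewrite fct_sumE.
  case: (pselect (hom_ZN_Z phi)) => h.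
    by rewrite hr //; apply: eq_bigr => i _; rewrite dmapE.
  rewrite dchi.2 //; rewrite big1 // => i _; exact: dmapN.
- move=> y hy.
  have [bt [cbt hbt ubt]] := univ H t hQ hb.
  have c1 : cont_hom H H (fmap t \o g) := cont_hom_comp cg cf.
  have e1 : forall x z, tg_S ZN x -> tg_S (TT R) z -> (fmap t \o g) (t x z) = t x z.
    by move=> x z hx hz /=; rewrite hgt // fmap_dmap.
  have c2 : cont_hom H H id := cont_hom_id (hTopH hQ).
  have h1 := ubt _ c1 e1 y hy.
  have h2 := ubt _ c2 (fun x z _ _ => erefl) y hy.
  exact: (etrans h1 (esym h2)).
Qed.


Theorem theoremA (R : realType) (H : tgrp)
    (t : tg_V ZN -> tg_V (TT R) -> tg_V H) :
  is_Q_tensor R ZN (TT R) H t -> top_iso (dual R HomZN) H.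
Proof. exact: final. Qed.
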